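(* Let $r_g>0$, $E>0$ and $n\in\{2,3\}$. For $r>0$ let $X(r)>0$ be the unique positive solution of $$X^n+\sqrt{r_g/r}\;X-E=0,$$ and define $H(r)=(n+1)\sqrt{r_g/r}-\dfrac{nE}{X(r)}$. Then $H$ has exactly one zero $r_H$ on $(0,\infty)$, given by $$r_H=\frac{3r_g}{4E}\quad(n=2),\qquad r_H=r_g\Big(\frac{16}{27E^2}\Big)^{2/3}\quad(n=3),$$ and $H$ is differentiable at $r_H$ with $H'(r_H)\neq0$. Consequently, for any $r_1>r_H$, $\big|\int_{r}^{r_1}ds/H(s)\big|\to\infty$ (logarithmically) as $r\to r_H^+$.
   Context: Physical interpretation: for an ingoing massless test particle of energy $E$ with dispersion relation $F(\zeta)=\zeta^n$ in the Painlevé–Gullstrand Schwarzschild background ($N=f=1$, shift $N^r=-\sqrt{r_g/r}$), the coordinate time along the trajectory is $t=t_0+\int dr/H(r,E)$; the divergence of $t$ at $r_H$ defines an energy-dependent horizon at $r_H$. *)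

(* Defs.v *)
From Stdlib Require Import Reals.
Open Scope R_scope.

Definition is_root_fun (n : nat) (rg E : R) (X : R -> R) : Prop :=
  forall r, 0 < r -> 0 < X r /\ X r ^ n + sqrt (rg / r) * X r - E = 0.

Definition Hfun (n : nat) (rg E : R) (X : R -> R) (r : R) : R :=
  INR (n + 1) * sqrt (rg / r) - INR n * E / X r.

Definition rH_formula (n : nat) (rg E : R) : R :=
  match n with
  | 2%nat => 3 * rg / (4 * E)
  | _ => rg * Rpower (16 / (27 * E ^ 2)) (2 / 3)
  end.

(* Main.v *)
Require Import Defs.
From Stdlib Require Import Reals Lra Psatz.
From Coquelicot Require Import Coquelicot.
Open Scope R_scope.

Lemma root_uniq n a x y : (n = 2%nat \/ n = 3%nat) -> 0 < a -> 0 < x -> 0 < y ->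
  x ^ n + a * x = y ^ n + a * y -> x = y.
Proof.
intros hn ha hx hy e; destruct hn; subst; simpl in e.
- assert ((x - y) * (x + y + a) = 0) by nra.
  apply Rmult_integral in H; destruct H; nra.
- assert ((x - y) * (x*x + x*y + y*y + a) = 0) by nra.
  apply Rmult_integral in H; destruct H; nra.
Qed.

Definition Fn (n : nat) (x x0 a : R) : R :=
  match n with 2%nat => 2 * x0 / (x + x0 + a)
  | _ => 3 * x0 * (x + x0) / (x*x + x*x0 + x0*x0 + a) end.

Lemma diff_id n x x0 a a0 E : (n = 2%nat \/ n = 3%nat) -> 0 < a -> 0 < x -> 0 < x0 ->
  x ^ n + a * x = E -> x0 ^ n + a0 * x0 = E ->
  (a - INR n * x ^ (n-1)) - (a0 - INR n * x0 ^ (n-1)) = (a - a0) * (1 + Fn n x x0 a).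
Proof.
intros hn ha hx hx0 e e0; destruct hn; subst; simpl in *; unfold Fn.
- assert (hd : 0 < x + x0 + a) by lra.
  assert (k : (x - x0) * (x + x0 + a) = - (a - a0) * x0) by nra.
  assert (k' : x - x0 = - (a - a0) * x0 / (x + x0 + a)).
  { rewrite <- k. field. lra. }
  replace (a - (1 + 1) * (x * 1) - (a0 - (1 + 1) * (x0 * 1)))
    with ((a - a0) - 2 * (x - x0)) by ring.
  rewrite k'. field. lra.
- assert (hd : 0 < x*x + x*x0 + x0*x0 + a) by nra.
  assert (k : (x - x0) * (x*x + x*x0 + x0*x0 + a) = - (a - a0) * x0) by nra.
  assert (k' : x - x0 = - (a - a0) * x0 / (x*x + x*x0 + x0*x0 + a)).
  { rewrite <- k. field. lra. }
  replace (a - (1 + 1 + 1) * (x * (x * 1)) - (a0 - (1 + 1 + 1) * (x0 * (x0 * 1))))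
    with ((a - a0) - 3 * (x - x0) * (x + x0)) by ring.
  rewrite k'. field. lra.
Qed.

Lemma div_bounds p q : 0 < q -> 0 <= p -> p <= 3 * q -> 0 <= p / q <= 3.
Proof.
intros hq hp hpq; split.
- apply Rmult_le_pos; auto. left; apply Rinv_0_lt_compat; auto.
- apply Rmult_le_reg_r with q; auto. unfold Rdiv; rewrite Rmult_assoc, Rinv_l; lra.
Qed.

Lemma Fn_bounds n x x0 a : (n = 2%nat \/ n = 3%nat) -> 0 < a -> 0 < x -> 0 < x0 ->
  0 <= Fn n x x0 a <= 3.
Proof.
intros hn ha hx hx0; destruct hn; subst; unfold Fn; apply div_bounds; nra.
Qed.

Lemma X_lip n x x0 a a0 E : (n = 2%nat \/ n = 3%nat) -> 0 < a -> 0 < x -> 0 < x0 ->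
  x ^ n + a * x = E -> x0 ^ n + a0 * x0 = E ->
  Rabs (x - x0) <= (x0 / x0 ^ (n-1)) * Rabs (a - a0).
Proof.
intros hn ha hx hx0 e e0.
assert (hm : 0 < x0 ^ (n-1)) by (apply pow_lt; auto).
assert (exists den, den >= x0 ^ (n-1) /\ (x - x0) * den = - (a - a0) * x0) as [den [hd k]].
{ destruct hn; subst; simpl in *.
  - exists (x + x0 + a); split; nra.
  - exists (x*x + x*x0 + x0*x0 + a); split; nra. }
assert (k2 : Rabs (x - x0) * den = Rabs (a - a0) * x0).
{ rewrite <- (Rabs_pos_eq den) by lra. rewrite <- Rabs_mult, k.
  rewrite Rabs_mult, Rabs_Ropp, (Rabs_pos_eq x0) by lra. ring. }
apply Rmult_le_reg_r with (x0 ^ (n-1)); auto.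
replace (x0 / x0 ^ (n - 1) * Rabs (a - a0) * x0 ^ (n - 1)) with (Rabs (a - a0) * x0)
  by (field; lra).
pose proof (Rabs_pos (x - x0)). nra.
Qed.

Lemma cont_lip (f a : R -> R) r0 K : 0 < r0 -> 0 < K ->
  (forall r, 0 < r -> Rabs (f r - f r0) <= K * Rabs (a r - a r0)) ->
  continuity_pt a r0 -> continuity_pt f r0.
Proof.
intros hr hK hl ha eps he.
destruct (ha (eps / K)) as [alp [halp hx]].
{ apply Rdiv_lt_0_compat; auto. }
exists (Rmin alp (r0 / 2)); split.
{ apply Rmin_pos; lra. }
intros x [hD hd]. simpl in *. unfold R_dist in *.
assert (h1 : Rabs (x - r0) < alp) by (eapply Rlt_le_trans; [exact hd|apply Rmin_l]).
assert (h2 : Rabs (x - r0) < r0/2) by (eapply Rlt_le_trans; [exact hd|apply Rmin_r]).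
assert (xp : 0 < x) by (apply Rabs_def2 in h2; lra).
specialize (hx x (conj hD h1)). simpl in hx. unfold R_dist in hx.
eapply Rle_lt_trans; [apply hl; auto|].
apply Rmult_lt_reg_l with (/K). apply Rinv_0_lt_compat; auto.
rewrite <- Rmult_assoc, Rinv_l by lra. replace (/ K * eps) with (eps / K) by (unfold Rdiv; ring). lra.
Qed.

Lemma deriv_mul_zero (f g h : R -> R) x0 l eta : 0 < eta ->
  (forall x, Rabs (x - x0) < eta -> h x = f x * g x) -> h x0 = 0 -> f x0 = 0 ->
  derivable_pt_lim f x0 l -> continuity_pt g x0 -> derivable_pt_lim h x0 (l * g x0).
Proof.
intros heta hh h0 f0 hf hg eps he.
set (G := Rabs (g x0) + 1).
assert (hG : 0 < G) by (unfold G; pose proof (Rabs_pos (g x0)); lra).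
set (e2 := Rmin 1 (eps / (2 * (Rabs l + 1)))).
assert (he2 : 0 < e2).
{ apply Rmin_pos; [lra|]. apply Rdiv_lt_0_compat; [lra|]. pose proof (Rabs_pos l); lra. }
destruct (hg e2 he2) as [dg [hdg hg']].
assert (he1 : 0 < eps / (2 * G)) by (apply Rdiv_lt_0_compat; lra).
destruct (hf _ he1) as [df hdf].
assert (hdfp := cond_pos df).
exists (mkposreal (Rmin eta (Rmin df dg)) ltac:(repeat apply Rmin_pos; lra)).
intros d hd0 hd. simpl in hd.
assert (d1 : Rabs d < eta) by (eapply Rlt_le_trans; [exact hd|apply Rmin_l]).
assert (d2 : Rabs d < df) by (eapply Rlt_le_trans; [exact hd|eapply Rle_trans; [apply Rmin_r|apply Rmin_l]]).
assert (d3 : Rabs d < dg) by (eapply Rlt_le_trans; [exact hd|eapply Rle_trans; [apply Rmin_r|apply Rmin_r]]).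
specialize (hdf d hd0 d2).
assert (hgx : Rabs (g (x0 + d) - g x0) < e2).
{ destruct (Req_dec d 0) as [->|nz]; [contradiction|].
  specialize (hg' (x0 + d)). simpl in hg'. unfold R_dist in hg'. apply hg'. split.
  - split; [exact I|]. intro c. apply nz. lra.
  - replace (x0 + d - x0) with d by ring. auto. }
rewrite hh by (replace (x0 + d - x0) with d by ring; auto).
rewrite h0, f0 in *.
set (q := (f (x0 + d) - 0) / d). fold q in hdf.
replace ((f (x0 + d) * g (x0 + d) - 0) / d - l * g x0)
  with ((q - l) * g (x0 + d) + l * (g (x0 + d) - g x0)) by (unfold q; field; auto).
assert (e2a : e2 <= 1) by apply Rmin_l.
assert (e2b : e2 <= eps / (2 * (Rabs l + 1))) by apply Rmin_r.
assert (hgb : Rabs (g (x0 + d)) <= G).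
{ unfold G. replace (g (x0 + d)) with (g x0 + (g (x0 + d) - g x0)) by ring.
  eapply Rle_trans; [apply Rabs_triang|]. lra. }
eapply Rle_lt_trans; [apply Rabs_triang|]. rewrite !Rabs_mult.
assert (t1 : Rabs (q - l) * Rabs (g (x0 + d)) <= eps / (2 * G) * G).
{ apply Rmult_le_compat; try apply Rabs_pos; lra. }
assert (t2 : Rabs l * Rabs (g (x0 + d) - g x0) <= Rabs l * (eps / (2 * (Rabs l + 1)))).
{ apply Rmult_le_compat_l; [apply Rabs_pos|lra]. }
assert (t3 : Rabs l * (eps / (2 * (Rabs l + 1))) < eps / 2).
{ pose proof (Rabs_pos l). apply Rmult_lt_reg_r with (2 * (Rabs l + 1)); [lra|].
  field_simplify; [|lra]. nra. }
replace (eps / (2 * G) * G) with (eps / 2) in t1 by (field; lra).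
assert (t4 : Rabs (q - l) * Rabs (g (x0 + d)) < eps / 2 \/ Rabs (q - l) * Rabs (g (x0 + d)) <= eps/2) by lra.
lra.
Qed.
Lemma a_deriv rg r : 0 < rg -> 0 < r ->
  derivable_pt_lim (fun r => sqrt (rg / r)) r (- sqrt (rg / r) / (2 * r)).
Proof.
intros hg hr. apply is_derive_Reals.
assert (hs : 0 < sqrt (rg / r)) by (apply sqrt_lt_R0; apply Rdiv_lt_0_compat; auto).
auto_derive.
- split; [lra|]. split; [|auto]. apply Rdiv_lt_0_compat; auto.
- assert (e := sqrt_sqrt (rg / r) ltac:(left; apply Rdiv_lt_0_compat; auto)).
  change (rg * / r) with (rg / r). set (s := sqrt (rg / r)) in *.
  assert (hrg : rg = s * s * r) by (rewrite e; field; lra).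
  rewrite hrg at 1. field. lra.
Qed.

Lemma star n rg E : 0 < rg -> 0 < E -> (n = 2%nat \/ n = 3%nat) ->
  0 < rH_formula n rg E /\ exists x0, 0 < x0 /\
    x0 ^ n + sqrt (rg / rH_formula n rg E) * x0 = E /\
    sqrt (rg / rH_formula n rg E) = INR n * x0 ^ (n - 1).
Proof.
intros hg hE [-> | ->]; cbn [rH_formula].
- assert (hp : 0 < 3 * rg / (4 * E)) by (apply Rdiv_lt_0_compat; lra).
  split; auto.
  set (x0 := sqrt (E / 3)).
  assert (hx : 0 < x0) by (apply sqrt_lt_R0; lra).
  assert (ex : x0 * x0 = E / 3) by (apply sqrt_sqrt; lra).
  assert (ea : sqrt (rg / (3 * rg / (4 * E))) = 2 * x0).
  { apply sqrt_lem_1; [left; apply Rdiv_lt_0_compat; lra|lra|].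
    replace (2 * x0 * (2 * x0)) with (4 * (x0 * x0)) by ring. rewrite ex. field; lra. }
  exists x0; rewrite ea; repeat split; auto; simpl; nra.
- set (q := Rpower (E / 4) (1 / 3)).
  assert (hq : 0 < q) by (apply exp_pos).
  assert (eq3 : q ^ 3 = E / 4).
  { unfold q. rewrite <- Rpower_pow by (apply exp_pos).
    rewrite Rpower_mult. replace (1 / 3 * INR 3) with 1 by (simpl; field).
    apply Rpower_1; lra. }
  assert (eR : Rpower (16 / (27 * E ^ 2)) (2 / 3) = / (9 * q ^ 4)).
  { replace (16 / (27 * E ^ 2)) with (Rpower (/ (3 * q ^ 2)) (INR 3)).
    - rewrite Rpower_mult. replace (INR 3 * (2 / 3)) with (INR 2) by (simpl; field).
      rewrite Rpower_pow. 2: { apply Rinv_0_lt_compat. apply Rmult_lt_0_compat; [lra|]. apply pow_lt; auto. }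
      simpl. field. lra.
    - rewrite Rpower_pow. 2: { apply Rinv_0_lt_compat. apply Rmult_lt_0_compat; [lra|]. apply pow_lt; auto. }
      replace E with (4 * q ^ 3) by lra. simpl. field. lra. }
  rewrite eR.
  assert (hq4 : 0 < q ^ 4) by (apply pow_lt; auto).
  split. { apply Rmult_lt_0_compat; auto. apply Rinv_0_lt_compat; lra. }
  assert (ea : sqrt (rg / (rg * / (9 * q ^ 4))) = 3 * q ^ 2).
  { apply sqrt_lem_1; [left; apply Rdiv_lt_0_compat; [lra|]; apply Rmult_lt_0_compat; [lra|apply Rinv_0_lt_compat; lra]|nra|].
    field. lra. }
  rewrite ea. exists q; repeat split; auto.
  simpl in *. nra. simpl. ring.
Qed.

Ltac cont := match goal with
 | |- continuity_pt (fun r => r) _ => apply continuity_pt_id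
 | |- continuity_pt (fun _ => ?c) _ => apply continuity_pt_const; intros ? ?; reflexivity
 | |- continuity_pt (fun r => @?A r + @?B r) _ => apply (continuity_pt_plus A B); cont
 | |- continuity_pt (fun r => @?A r - @?B r) _ => apply (continuity_pt_minus A B); cont
 | |- continuity_pt (fun r => @?A r * @?B r) _ => apply (continuity_pt_mult A B); cont
 | |- continuity_pt (fun r => @?A r / @?B r) _ => apply (continuity_pt_div A B); [cont|cont|]
 | |- continuity_pt (fun r => / @?A r) _ => apply (continuity_pt_inv A); [cont|]
 | _ => idtac end.

Lemma int_log rH r r1 K : rH < r < r1 ->
  is_RInt (fun s => K / (s - rH)) r r1 (K * (ln (r1 - rH) - ln (r - rH))).
Proof.
intros hr.
replace (K * (ln (r1 - rH) - ln (r - rH))) with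
  (minus ((fun s => K * ln (s - rH)) r1) ((fun s => K * ln (s - rH)) r))
  by (unfold minus, plus, opp; simpl; ring).
apply (is_RInt_derive (fun s => K * ln (s - rH)) (fun s => K / (s - rH))).
- intros x hx. rewrite Rmin_left, Rmax_right in hx by lra.
  auto_derive. lra. field. lra.
- intros x hx. rewrite Rmin_left, Rmax_right in hx by lra.
  apply continuity_pt_filterlim. cont. lra.
Qed.

Lemma int_bounds (h : R -> R) rH r r1 c C : 0 < c -> 0 < C -> rH < r < r1 ->
  (forall s, rH < s <= r1 -> c * (s - rH) <= - h s <= C * (s - rH)) ->
  forall pr : Riemann_integrable (fun s => / h s) r r1,
  (1 / C) * (ln (r1 - rH) - ln (r - rH)) <= Rabs (RiemannInt pr) <=
  (1 / c) * (ln (r1 - rH) - ln (r - rH)).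
Proof.
intros hc hC hr hb pr.
rewrite <- RInt_Reals.
assert (ex := ex_RInt_Reals_1 _ _ _ pr).
assert (hL : 0 < ln (r1 - rH) - ln (r - rH)).
{ assert (ln (r - rH) < ln (r1 - rH)) by (apply ln_increasing; lra). lra. }
assert (i1 := int_log rH r r1 (- (1 / c)) hr).
assert (i2 := int_log rH r r1 (- (1 / C)) hr).
assert (l1 : RInt (fun s => - (1 / c) / (s - rH)) r r1 <= RInt (fun s => / h s) r r1).
{ apply RInt_le; [lra| eexists; eauto | auto |].
  intros s hs. destruct (hb s ltac:(lra)) as [b1 b2].
  assert (ct : 0 < c * (s - rH)) by (apply Rmult_lt_0_compat; lra).
  replace (/ h s) with (- / (- h s)) by (field; lra).
  unfold Rdiv. rewrite Ropp_mult_distr_l_reverse. apply Ropp_le_contravar.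
  rewrite Rmult_1_l, <- Rinv_mult. apply Rinv_le_contravar; lra. }
assert (l2 : RInt (fun s => / h s) r r1 <= RInt (fun s => - (1 / C) / (s - rH)) r r1).
{ apply RInt_le; [lra| auto | eexists; eauto |].
  intros s hs. destruct (hb s ltac:(lra)) as [b1 b2].
  assert (ct : 0 < c * (s - rH)) by (apply Rmult_lt_0_compat; lra).
  replace (/ h s) with (- / (- h s)) by (field; lra).
  unfold Rdiv. rewrite Ropp_mult_distr_l_reverse. apply Ropp_le_contravar.
  rewrite Rmult_1_l, <- Rinv_mult. apply Rinv_le_contravar; nra. }
rewrite (is_RInt_unique _ _ _ _ i1) in l1.
rewrite (is_RInt_unique _ _ _ _ i2) in l2.
assert (0 < 1 / C * (ln (r1 - rH) - ln (r - rH))).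
{ apply Rmult_lt_0_compat; auto. apply Rdiv_lt_0_compat; lra. }
rewrite Rabs_left by lra. lra.
Qed.
Lemma bnd_alg rg rH s r1 b a0 F : 0 < rg -> 0 < rH -> rH < s <= r1 -> 0 < b -> 0 < a0 ->
  b * b = rg / s -> a0 * a0 = rg / rH -> 0 <= F <= 3 ->
  rg / (2 * rH * r1 * a0) * (s - rH) <= (a0 - b) * (1 + F) <=
  4 * rg / (rH * rH * a0) * (s - rH).
Proof.
intros hg hH hs hb ha eb ea hF.
assert (key : (a0 - b) * (a0 + b) = rg * (s - rH) / (rH * s)).
{ replace ((a0 - b) * (a0 + b)) with (a0 * a0 - b * b) by ring. rewrite eb, ea. field. lra. }
assert (hd : 0 < a0 - b).
{ assert (rg / s < rg / rH).
  { unfold Rdiv. apply Rmult_lt_compat_l; auto. apply Rinv_lt_contravar; nra. }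
  nra. }
assert (e : a0 - b = rg * (s - rH) / (rH * s * (a0 + b))).
{ apply Rmult_eq_reg_r with (a0 + b); [|lra]. rewrite key. field. repeat split; lra. }
split.
- apply Rle_trans with (a0 - b); [|nra].
  rewrite e. replace (rg / (2 * rH * r1 * a0) * (s - rH)) with (rg * (s - rH) * / (2 * rH * r1 * a0)) by (field; lra).
  unfold Rdiv. apply Rmult_le_compat_l. nra.
  apply Rinv_le_contravar. repeat apply Rmult_lt_0_compat; lra.
  assert (rH * s * (a0 + b) <= rH * r1 * (a0 + b)) by (apply Rmult_le_compat_r; nra).
  assert (0 < rH * r1) by nra. nra.
- apply Rle_trans with ((a0 - b) * 4); [nra|].
  rewrite e. unfold Rdiv.
  replace (4 * rg * / (rH * rH * a0) * (s - rH)) with (rg * (s - rH) * / (rH * rH * a0) * 4) by ring.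
  apply Rmult_le_compat_r; [lra|]. apply Rmult_le_compat_l; [nra|].
  apply Rinv_le_contravar. repeat apply Rmult_lt_0_compat; lra.
  assert (rH * rH * a0 <= rH * s * a0) by (apply Rmult_le_compat_r; nra). assert (0 <= rH*s*b) by (apply Rmult_le_pos; [apply Rmult_le_pos|]; lra). lra.
Qed.

Lemma a_deriv' rg r c : 0 < rg -> 0 < r ->
  derivable_pt_lim (fun r => sqrt (rg / r) - c) r (- sqrt (rg / r) / (2 * r)).
Proof.
intros hg hr.
replace (- sqrt (rg / r) / (2 * r)) with (- sqrt (rg / r) / (2 * r) - 0) by ring.
apply (derivable_pt_lim_minus (fun r => sqrt (rg / r)) (fun _ => c)).
apply a_deriv; auto. apply derivable_pt_lim_const.
Qed.
Theorem mainTheorem5 (rg E : R) (n : nat) (X : R -> R)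
  (hrg : 0 < rg) (hE : 0 < E) (hn : n = 2%nat \/ n = 3%nat)
  (hX : is_root_fun n rg E X) :
  let H := Hfun n rg E X in
  let rH := rH_formula n rg E in
  (* uniqueness of the positive root X(r) *)
  (forall r Y, 0 < r -> 0 < Y -> Y ^ n + sqrt (rg / r) * Y - E = 0 -> Y = X r) /\
  (* rH is the unique zero of H on (0, oo) *)
  (0 < rH /\ H rH = 0 /\ (forall r, 0 < r -> H r = 0 -> r = rH)) /\
  (* H is differentiable at rH with nonzero derivative *)
  (exists d, derivable_pt_lim H rH d /\ d <> 0) /\
  (forall r1, rH < r1 ->
     (* 1/H is Riemann integrable on [r, r1] for rH < r < r1 *)
     (forall r, rH < r < r1 -> inhabited (Riemann_integrable (fun s => / H s) r r1)) /\
     (* the integral diverges as r -> rH+ *)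
     (forall M, exists delta, 0 < delta /\
        forall r (pr : Riemann_integrable (fun s => / H s) r r1),
          rH < r < rH + delta -> r < r1 -> M < Rabs (RiemannInt pr)) /\
     (* and it does so logarithmically *)
     (exists c1 c2 C delta, 0 < c1 /\ 0 < c2 /\ 0 < delta /\
        forall r (pr : Riemann_integrable (fun s => / H s) r r1),
          rH < r < rH + delta -> r < r1 ->
          c1 * Rabs (ln (r - rH)) - C <= Rabs (RiemannInt pr) /\
          Rabs (RiemannInt pr) <= c2 * Rabs (ln (r - rH)) + C)).
Proof.
intros H rH.
destruct (star n rg E hrg hE hn) as [hrH [x0 [hx0 [ex0 ea0]]]].
fold rH in hrH, ex0, ea0.
assert (hap : forall r, 0 < r -> 0 < sqrt (rg / r)).
{ intros r hr; apply sqrt_lt_R0, Rdiv_lt_0_compat; auto. }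
assert (hsq : forall r, 0 < r -> sqrt (rg / r) * sqrt (rg / r) = rg / r).
{ intros r hr; apply sqrt_sqrt; left; apply Rdiv_lt_0_compat; auto. }
assert (hXr : forall r, 0 < r -> 0 < X r /\ X r ^ n + sqrt (rg / r) * X r = E).
{ intros r hr; destruct (hX r hr); split; lra. }
assert (huniq : forall r Y, 0 < r -> 0 < Y -> Y ^ n + sqrt (rg / r) * Y - E = 0 -> Y = X r).
{ intros r Y hr hY e. destruct (hXr r hr) as [p q].
  apply (root_uniq n (sqrt (rg / r))); auto. lra. }
assert (hX0 : X rH = x0) by (symmetry; apply huniq; auto; lra).
set (a0 := sqrt (rg / rH)) in *.
assert (ha0 : 0 < a0) by (apply hap; auto).
assert (hHf : forall r, 0 < r -> H r = sqrt (rg / r) - INR n * X r ^ (n - 1)).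
{ intros r hr. destruct (hXr r hr) as [p q]. unfold H, Hfun. rewrite <- q.
  destruct hn as [-> | ->]; simpl; field; lra. }
assert (hdiff : forall r, 0 < r -> H r = (sqrt (rg / r) - a0) * (1 + Fn n (X r) x0 (sqrt (rg / r)))).
{ intros r hr. destruct (hXr r hr) as [p q].
  rewrite <- (diff_id n (X r) x0 (sqrt (rg / r)) a0 E); auto.
  rewrite hHf by auto. rewrite ea0. ring. }
assert (hF : forall r, 0 < r -> 0 <= Fn n (X r) x0 (sqrt (rg / r)) <= 3).
{ intros r hr. apply Fn_bounds; auto. apply hXr; auto. }
assert (hH0 : H rH = 0) by (rewrite hdiff by auto; fold a0; ring).
assert (hac : forall r, 0 < r -> continuity_pt (fun r => sqrt (rg / r)) r).
{ intros r hr. apply derivable_continuous_pt. exists (- sqrt (rg / r) / (2 * r)). apply a_deriv; auto. }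
assert (hXc : forall r, 0 < r -> continuity_pt X r).
{ intros r0 hr0. destruct (hXr r0 hr0) as [p q].
  apply (cont_lip X (fun r => sqrt (rg / r)) r0 (X r0 / X r0 ^ (n - 1))); auto.
  { apply Rdiv_lt_0_compat; auto. apply pow_lt; auto. }
  intros r hr. destruct (hXr r hr) as [p' q'].
  apply (X_lip n (X r) (X r0) (sqrt (rg / r)) (sqrt (rg / r0)) E); auto. }
split; [exact huniq|].
split.
{ split; [auto|]. split; [auto|].
  intros r hr e. rewrite hdiff in e by auto.
  apply Rmult_integral in e. destruct e as [e|e]; [|specialize (hF r hr); lra].
  assert (e' : rg / r = rg / rH).
  { apply sqrt_inj; try (left; apply Rdiv_lt_0_compat; auto). fold a0. lra. }
  assert (k := f_equal (fun t => t * r * rH) e'). simpl in k.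
  replace (rg / r * r * rH) with (rg * rH) in k by (field; lra).
  replace (rg / rH * r * rH) with (rg * r) in k by (field; lra).
  apply Rmult_eq_reg_l with rg; lra. }
split.
{ set (g := fun r => 1 + Fn n (X r) x0 (sqrt (rg / r))).
  assert (hgc : continuity_pt g rH).
  { assert (p := hXc rH hrH). assert (q := hac rH hrH). assert (hx := proj1 (hXr rH hrH)).
    unfold g. destruct hn as [-> | ->]; unfold Fn; cont;
    try (apply hXc; auto); try (apply hac; auto); fold a0; nra. }
  exists (- a0 / (2 * rH) * g rH). split.
  - apply (deriv_mul_zero (fun r => sqrt (rg / r) - a0) g H rH _ rH); auto.
    + intros x hx. apply Rabs_def2 in hx. unfold g. apply hdiff; lra.
    + fold a0; ring.
    + apply a_deriv'; auto.
  - assert (1 <= g rH) by (unfold g; specialize (hF rH hrH); lra).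
    assert (- a0 / (2 * rH) < 0).
    { unfold Rdiv. rewrite Ropp_mult_distr_l_reverse. apply Ropp_lt_gt_0_contravar.
      apply Rmult_lt_0_compat; auto. apply Rinv_0_lt_compat; lra. }
    nra. }
intros r1 hr1.
set (c := rg / (2 * rH * r1 * a0)). set (C := 4 * rg / (rH * rH * a0)).
assert (hc : 0 < c) by (unfold c; apply Rdiv_lt_0_compat; [lra|]; repeat apply Rmult_lt_0_compat; lra).
assert (hC : 0 < C) by (unfold C; apply Rdiv_lt_0_compat; [lra|]; repeat apply Rmult_lt_0_compat; lra).
assert (hb : forall s, rH < s <= r1 -> c * (s - rH) <= - H s <= C * (s - rH)).
{ intros s hs. rewrite hdiff by lra.
  assert (k := bnd_alg rg rH s r1 (sqrt (rg / s)) a0 (Fn n (X s) x0 (sqrt (rg / s)))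
     hrg hrH hs (hap s ltac:(lra)) ha0 (hsq s ltac:(lra)) (hsq rH hrH) (hF s ltac:(lra))).
  fold c C in k. lra. }
assert (core : forall r (pr : Riemann_integrable (fun s => / H s) r r1), rH < r < r1 ->
  (1 / C) * (ln (r1 - rH) - ln (r - rH)) <= Rabs (RiemannInt pr) <=
  (1 / c) * (ln (r1 - rH) - ln (r - rH))).
{ intros r pr hr. apply int_bounds; auto. }
set (L1 := ln (r1 - rH)) in *.
set (iC := 1 / C) in *. set (ic := 1 / c) in *.
assert (hiC : 0 < iC) by (unfold iC; apply Rdiv_lt_0_compat; lra).
assert (hic : 0 < ic) by (unfold ic; apply Rdiv_lt_0_compat; lra).
assert (eiC : iC * C = 1) by (unfold iC; field; lra).
assert (hlog : forall r, rH < r < rH + 1 -> Rabs (ln (r - rH)) = - ln (r - rH)).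
{ intros r hr. apply Rabs_left. rewrite <- ln_1. apply ln_increasing; lra. }
split.
{ intros r hr. constructor. apply continuity_implies_RiemannInt; [lra|].
  intros s hs. destruct (hb s ltac:(lra)) as [b1 b2].
  assert (c * (s - rH) > 0) by (apply Rmult_lt_0_compat; lra).
  apply (continuity_pt_inv H); [|lra].
  destruct (hXr s ltac:(lra)) as [p q].
  unfold H, Hfun. cont; try (apply hXc; lra); try (apply hac; lra). lra. }
split.
{ intros M. set (T := C * Rabs M + Rabs L1 + 1).
  exists (Rmin 1 (exp (- T))). split. { apply Rmin_pos; [lra|apply exp_pos]. }
  intros r pr hr hr'.
  assert (h1 : r - rH < 1) by (assert (Rmin 1 (exp (- T)) <= 1) by apply Rmin_l; lra).
  assert (h2 : r - rH < exp (- T)) by (assert (Rmin 1 (exp (- T)) <= exp (- T)) by apply Rmin_r; lra).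
  assert (hl : ln (r - rH) < - T) by (rewrite <- (ln_exp (- T)); apply ln_increasing; lra).
  destruct (core r pr ltac:(lra)) as [k1 k2].
  assert (hL : iC * (L1 - ln (r - rH)) > iC * (L1 + T)) by (apply Rmult_lt_compat_l; lra).
  assert (iC * (L1 + T) = iC * (L1 + Rabs L1) + iC + Rabs M).
  { unfold T. replace (iC * (L1 + (C * Rabs M + Rabs L1 + 1))) with
      (iC * (L1 + Rabs L1) + iC + (iC * C) * Rabs M) by ring. rewrite eiC. ring. }
  assert (iC * (L1 + Rabs L1) >= 0).
  { assert (L1 + Rabs L1 >= 0) by (unfold Rabs; destruct Rcase_abs; lra). nra. }
  assert (M <= Rabs M) by apply RRle_abs. lra. }
exists iC, ic, (Rabs L1 * iC + Rabs L1 * ic), 1.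
split; [auto|]. split; [auto|]. split; [lra|].
intros r pr hr hr'. destruct (core r pr ltac:(lra)) as [k1 k2].
rewrite hlog by lra.
assert (- Rabs L1 <= L1 <= Rabs L1) by (unfold Rabs; destruct Rcase_abs; lra).
split; nra.
Qed.
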